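(* Let $A$ be a commutative ring with $1\ne0$ and let $D(A)$ be the set of all divisibilities on $A$. The constructible topology on $D(A)$ is compact. In particular, the spectral topology on $D(A)$ is quasi-compact.
   Context: A divisibility on $A$ is a binary relation $|\subseteq A\times A$ such that for all $a,b,c$: (1) $a|a$; (2) $a|b,\ b|c\Rightarrow a|c$; (3) $a|b,\ a|c\Rightarrow a|b-c$; (4) $a|b\Rightarrow ac|bc$; (5) $0\nmid1$. The spectral topology on $D(A)$ is generated by the sets $U(a,b)=\{|\in D(A);\ a\nmid b\}$, $a,b\in A$; the constructible topology is generated by the sets $U(a,b)$ together with their complements $V(a,b)=\{|\in D(A);\ a|b\}$. *)

(* Defs.v *)
From Stdlib Require Import List.
From mathcomp Require Import all_boot all_algebra.
Set Implicit Arguments. Unset Strict Implicit. Unset Printing Implicit Defensive.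
Import GRing.Theory.
Local Open Scope ring_scope.

Definition is_divisibility (A : comNzRingType) (dv : A -> A -> Prop) : Prop :=
  [/\ (forall a, dv a a),
      (forall a b c, dv a b -> dv b c -> dv a c),
      (forall a b c, dv a b -> dv a c -> dv a (b - c)),
      (forall a b c, dv a b -> dv (a * c) (b * c)) &
      ~ dv 0 1].

Definition divisibility (A : comNzRingType) :=
  { dv : A -> A -> Prop | is_divisibility dv }.

Definition dvrel (A : comNzRingType) (d : divisibility A) : A -> A -> Prop :=
  proj1_sig d.

Definition Uset (A : comNzRingType) (a b : A) : divisibility A -> Prop :=
  fun d => ~ dvrel d a b.
Definition Vset (A : comNzRingType) (a b : A) : divisibility A -> Prop :=
  fun d => dvrel d a b.

Inductive gen_open (T : Type) (S : (T -> Prop) -> Prop) : (T -> Prop) -> Prop :=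
  | gen_open_sub : forall U, S U -> gen_open S U
  | gen_open_full : gen_open S (fun _ => True)
  | gen_open_inter : forall U V, gen_open S U -> gen_open S V ->
      gen_open S (fun x => U x /\ V x)
  | gen_open_union : forall (I : Type) (F : I -> T -> Prop),
      (forall i, gen_open S (F i)) -> gen_open S (fun x => exists i, F i x).

Definition quasi_compact (T : Type) (op : (T -> Prop) -> Prop) : Prop :=
  forall (I : Type) (F : I -> T -> Prop),
    (forall i, op (F i)) -> (forall x, exists i, F i x) ->
    exists s : seq I, forall x, exists2 i, List.In i s & F i x.

Definition hausdorff (T : Type) (op : (T -> Prop) -> Prop) : Prop :=
  forall x y : T, x <> y ->
    exists U V, [/\ op U, op V, U x, V y & forall z, ~ (U z /\ V z)].

Definition compact_space (T : Type) (op : (T -> Prop) -> Prop) : Prop :=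
  quasi_compact op /\ hausdorff op.

Definition spectral_open (A : comNzRingType) : (divisibility A -> Prop) -> Prop :=
  gen_open (fun W => exists a b : A, W = Uset a b).

Definition constructible_open (A : comNzRingType) : (divisibility A -> Prop) -> Prop :=
  gen_open (fun W => exists a b : A, W = Uset a b \/ W = Vset a b).

(* Main.v *)
From HB Require Import structures.
Require Import Defs.
From mathcomp Require Import all_boot all_algebra.
From mathcomp Require Import all_classical topology_structure compact discrete_topology bool_topology function_spaces.
Import GRing.Theory.
Local Open Scope classical_set_scope.

Definition PP (A : comNzRingType) := prod_topology (fun _ : (A * A)%type => bool).
HB.instance Definition _ A := Pointed.on (PP A).
HB.instance Definition _ A := Topological.on (PP A).

Section S.
Variable A : comNzRingType.
Local Notation P := (PP A).

Lemma coord_near (p : A * A) (f : P) : nbhs f [set g : P | g p = f p].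
Proof.
apply: open_nbhs_nbhs; split => //.
have -> : [set g : P | g p = f p] = proj p @^-1` [set f p] by [].
apply: open_comp; [move=> + _; exact: proj_continuous| apply: discrete_open].
Qed.

Lemma coord_near3 (p1 p2 p3 : A * A) (f : P) :
  nbhs f [set g : P | g p1 = f p1 /\ g p2 = f p2 /\ g p3 = f p3].
Proof.
apply: filterS (filterI (coord_near p1 f) (filterI (coord_near p2 f) (coord_near p3 f))).
by move=> g [? [? ?]].
Qed.

Definition emb (d : divisibility A) : P := fun p => `[< dvrel d p.1 p.2 >].

Lemma embP d a b : emb d (a, b) = true <-> dvrel d a b.
Proof. by split => [/asboolP|/asboolP]. Qed.

Definition K : set P := range emb.

Lemma K_closed : closed K.
Proof.
rewrite -openC openE => f nKf.
have [ax1|/existsNP [a /negP/negbTE na]] := pselect (forall a, f (a,a)); last first.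
  apply: filterS (coord_near (a,a) f) => g hg [d _ ed]; subst g.
  case: d hg => dv [h1 h2 h3 h4 h5] hg.
  by move: (proj2 (@embP (exist _ dv (And5 h1 h2 h3 h4 h5)) a a) (h1 a)); rewrite hg na.
have [ax2|/existsNP[a /existsNP[b /existsNP[c /not_implyP [hab /not_implyP [hbc /negP/negbTE hac]]]]]]
  := pselect (forall a b c, f(a,b) -> f(b,c) -> f(a,c)); last first.
  apply: filterS (coord_near3 (a,b) (b,c) (a,c) f) => g [hg1 [hg2 hg3]] [d _ ed]; subst g.
  move: hg1 hg2 hg3; rewrite hab hbc hac => /embP h1 /embP h2 /negP h3; apply: h3.
  by apply/embP; case: d h1 h2 => dv [? t ? ? ?] /=; apply: t.
have [ax3|/existsNP[a /existsNP[b /existsNP[c /not_implyP [hab /not_implyP [hbc /negP/negbTE hac]]]]]]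
  := pselect (forall a b c, f(a,b) -> f(a,c) -> f(a,(b - c)%R)); last first.
  apply: filterS (coord_near3 (a,b) (a,c) (a,(b-c)%R) f) => g [hg1 [hg2 hg3]] [d _ ed]; subst g.
  move: hg1 hg2 hg3; rewrite hab hbc hac => /embP h1 /embP h2 /negP h3; apply: h3.
  by apply/embP; case: d h1 h2 => dv [? ? t ? ?] /=; apply: t.
have [ax4|/existsNP[a /existsNP[b /existsNP[c /not_implyP [hab /negP/negbTE hac]]]]]
  := pselect (forall a b c, f(a,b) -> f((a * c)%R,(b * c)%R)); last first.
  apply: filterS (coord_near3 (a,b) (a,b) ((a * c)%R,(b*c)%R) f) => g [hg1 [_ hg3]] [d _ ed]; subst g.
  move: hg1 hg3; rewrite hab hac => /embP h1 /negP h3; apply: h3.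
  by apply/embP; case: d h1 => dv [? ? ? t ?] /=; apply: t.
have [ax5|/negP/negPn h01] := pselect (~~ f (0%R, 1%R)); last first.
  apply: filterS (coord_near (0%R,1%R) f) => g hg [d _ ed]; subst g.
  move: hg; rewrite h01 => /embP; by case: d => dv [? ? ? ? t].
exfalso; apply: nKf.
have hd : is_divisibility (fun a b => f (a, b)).
  by split => //; apply/negP.
exists (exist _ _ hd) => //.
apply: functional_extensionality_dep => -[a b].
by rewrite /emb /= asboolb.
Qed.

Lemma K_compact : compact K.
Proof.
apply: (@subclosed_compact _ K setT K_closed) => //.
have := @tychonoff _ (fun _ : (A * A)%type => bool) _ (fun=> bool_compact).
by congr (compact _); rewrite eqEsubset.
Qed.

Lemma gen_emb (O : divisibility A -> Prop) : constructible_open O ->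
  exists O' : set P, open O' /\ forall d, O d <-> O' (emb d).
Proof.
elim => [U [a [b [->|->]]]| |U V _ [U' [oU hU]] _ [V' [oV hV]]|I F _ IH].
- exists [set g : P | g (a, b) = false]; split.
    have -> : [set g : P | g (a, b) = false] = proj (a, b) @^-1` [set false] by [].
    apply: open_comp; [move=> + _; exact: proj_continuous| apply: discrete_open].
  move=> d; rewrite /Uset /=; split.
    by move=> h; apply/negbTE/negP => /embP.
  by move=> h /embP; rewrite h.
- exists [set g : P | g (a, b) = true]; split.
    have -> : [set g : P | g (a, b) = true] = proj (a, b) @^-1` [set true] by [].
    apply: open_comp; [move=> + _; exact: proj_continuous| apply: discrete_open].
  by move=> d; rewrite /Vset /=; split => /embP.
- by exists setT; split => //; exact: openT.
- exists (U' `&` V'); split; first exact: openI.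
  by move=> d; rewrite /= hU hV.
- have /choice [G hG] := IH.
  exists (\bigcup_(i in setT) G i); split.
    by apply: bigcup_open => i _; case: (hG i).
  move=> d; split => [[i Fi]|[i _ Gi]].
    by exists i => //; apply/(proj2 (hG i)).
  by exists i; apply/(proj2 (hG i)).
Qed.

Lemma in_In (T : eqType) (x : T) (s : seq T) : x \in s -> List.In x s.
Proof.
elim: s => //= y s IH; rewrite in_cons => /orP [/eqP ->|/IH]; [left|right] => //.
Qed.

Lemma constr_qc : quasi_compact (@constructible_open A).
Proof.
move=> I F oF cov.
have /choice [G hG] : forall i : {classic I}, exists O' : set P,
    open O' /\ forall d, F i d <-> O' (emb d) by move=> i; exact: gen_emb.
have := K_compact; rewrite (@compact_cover (PP A)) => /(_ {classic I} setT G).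
case.
- by move=> i _; case: (hG i).
- move=> f [d _ <-]; have [i Fi] := cov d.
  by exists i => //; apply/(proj2 (hG i)).
move=> D' _ hD; exists (finmap.enum_fset D') => d.
have [i /= iD Gi] := hD (emb d) (ex_intro2 _ _ d Logic.I erefl).
exists i; last by apply/(proj2 (hG i)).
by apply: (@in_In {classic I}); exact: iD.
Qed.

Lemma constr_haus : hausdorff (@constructible_open A).
Proof.
move=> x y nxy.
have [a [b hab]] : exists a b, ~ (dvrel x a b <-> dvrel y a b).
  apply: contrapT => hn; apply: nxy.
  case: x y hn => [dx hx] [dy hy] /= hn.
  have edx : dx = dy.
    apply: functional_extensionality_dep => a; apply: functional_extensionality_dep => b.
    apply: propositional_extensionality.
    by apply: contrapT => h; apply: hn; exists a, b.
  subst dy; congr exist; exact: Prop_irrelevance.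
have [hx|hx] := pselect (dvrel x a b).
- have hy : ~ dvrel y a b by move=> hy; apply: hab.
  exists (Vset a b), (Uset a b); split => //.
  + by apply: gen_open_sub; exists a, b; right.
  + by apply: gen_open_sub; exists a, b; left.
  + by move=> z [].
- have hy : dvrel y a b by apply: contrapT => hy; apply: hab.
  exists (Uset a b), (Vset a b); split => //.
  + by apply: gen_open_sub; exists a, b; left.
  + by apply: gen_open_sub; exists a, b; right.
  + by move=> z [].
Qed.

Lemma gen_mono T (S1 S2 : (T -> Prop) -> Prop) O :
  (forall W, S1 W -> S2 W) -> gen_open S1 O -> gen_open S2 O.
Proof.
move=> h; elim => [U /h ?| |U V _ ? _ ?|I F _ ?].
- exact: gen_open_sub.
- exact: gen_open_full.
- exact: gen_open_inter.
- exact: gen_open_union.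
Qed.

End S.

Theorem lemma3p3 (A : comNzRingType) :
  compact_space (@constructible_open A) /\ quasi_compact (@spectral_open A).
Proof.
split; first by split; [exact: constr_qc | exact: constr_haus].
move=> I F oF cov; apply: (@constr_qc A I F) => // i.
by apply: gen_mono (oF i) => W [a [b ->]]; exists a, b; left.
Qed.
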